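(* There is an absolute constant $C$ such that the following holds. Let $x,z\in\mathbb{R}^3$ with $r=|x-z|>0$, and choose Cartesian coordinates in which $x=(-r/2,0,0)$ and $z=(r/2,0,0)$. For $y\in\mathbb{R}^3$ let $\rho=|x-y|+|y-z|$ and let $\theta\in(0,\pi)$, $\phi\in[0,2\pi)$ be the elliptical coordinates of $y$ defined by $$y_1=\tfrac{\rho}{2}\cos\theta,\quad y_2=\tfrac{\sqrt{\rho^2-r^2}}{2}\sin\theta\cos\phi,\quad y_3=\tfrac{\sqrt{\rho^2-r^2}}{2}\sin\theta\sin\phi.$$ Then for every $f\in\mathcal K_2$, $$\int_{\{y:\ \rho\le 2r\}}\frac{|f(y)|\,dy}{r\sqrt{\rho^2-r^2}\,\sin\theta}\le C\|f\|_{\mathcal K_2}.$$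
   Context: $\mathcal K_2$ is the space of functions on $\mathbb{R}^3$ with $\|f\|_{\mathcal K_2}=\sup_{w\in\mathbb{R}^3}\int_{\mathbb{R}^3}\frac{|f(y)|}{|y-w|^2}dy<\infty$. *)

(* Defs.v *)
From HB Require Import structures.
From mathcomp Require Import all_boot all_order all_algebra.
From mathcomp Require Import all_classical all_reals all_analysis.
Set Implicit Arguments. Unset Strict Implicit. Unset Printing Implicit Defensive.
Import Order.TTheory GRing.Theory Num.Theory.
Local Open Scope classical_set_scope.
Local Open Scope ring_scope.

Section Defs.
Variable R : realType.

Definition R3 := ((R * R) * R)%type.

Definition leb3 := ((@lebesgue_measure R \x @lebesgue_measure R) \x @lebesgue_measure R)%E.

Definition pt (a b c : R) : R3 := ((a, b), c).
Definition c1 (y : R3) : R := y.1.1.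
Definition c2 (y : R3) : R := y.1.2.
Definition c3 (y : R3) : R := y.2.

Definition dot3 (u v : R3) : R := c1 u * c1 v + c2 u * c2 v + c3 u * c3 v.
Definition sub3 (u v : R3) : R3 := pt (c1 u - c1 v) (c2 u - c2 v) (c3 u - c3 v).
Definition norm3 (u : R3) : R := Num.sqrt (dot3 u u).
Definition dist3 (u v : R3) : R := norm3 (sub3 u v).

Definition K2norm (f : R3 -> R) : \bar R :=
  ereal_sup [set (\int[leb3]_(y in setT) ((`|f y| / (dist3 y w) ^+ 2)%:E))%E
            | w in [set: R3]].

Definition inK2 (f : R3 -> R) : Prop :=
  measurable_fun setT f /\ (K2norm f < +oo)%E.

(* Elliptical coordinates of y relative to the foci x, z (r = |x - z| > 0),
   in the Cartesian frame where x = (-r/2,0,0), z = (r/2,0,0):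
   the first coordinate y_1 is the component of y - (x+z)/2 along (z-x)/r. *)
Definition ell_rho (x z y : R3) : R := dist3 x y + dist3 y z.
Definition ell_y1 (x z y : R3) : R :=
  let r := dist3 x z in
  let m := pt ((c1 x + c1 z) / 2) ((c2 x + c2 z) / 2) ((c3 x + c3 z) / 2) in
  dot3 (sub3 y m) (sub3 z x) / r.
(* theta in (0, pi) with y_1 = (rho/2) cos theta, hence
   cos theta = 2 y_1 / rho and sin theta = sqrt(1 - cos^2 theta) >= 0. *)
Definition ell_cos_theta (x z y : R3) : R := 2 * ell_y1 x z y / ell_rho x z y.
Definition ell_sin_theta (x z y : R3) : R := Num.sqrt (1 - ell_cos_theta x z y ^+ 2).

End Defs.

(* Main.v *)
Require Import Defs.
From HB Require Import structures.
From mathcomp Require Import all_boot all_order all_algebra.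
From mathcomp Require Import all_classical all_reals all_analysis.
From mathcomp Require Import ring lra.
Import measurable_realfun.
Import Order.TTheory GRing.Theory Num.Theory.
Local Open Scope classical_set_scope.
Local Open Scope ring_scope.

Section psf.
Local Open Scope ereal_scope.
Context d1 d2 (T1 : measurableType d1) (T2 : measurableType d2) (R : realType).
Variable m1 : {sigma_finite_measure set T1 -> \bar R}.
Variable m2 : {sigma_finite_measure set T2 -> \bar R}.

Lemma my_pm_sigma_finite : sigma_finite setT (m1 \x m2).
Proof.
have /sigma_finiteP[F [TF ndF Foo]] := sigma_finiteT m1.
have /sigma_finiteP[G [TG ndG Goo]] := sigma_finiteT m2.
exists (fun n => F n `*` G n).
 rewrite -setXTT TF TG predeqE => -[x y]; split.
    move=> [/= [n _ Fnx] [k _ Gky]]; exists (maxn n k) => //; split.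
    - by move: x Fnx; exact/subsetPset/ndF/leq_maxl.
    - by move: y Gky; exact/subsetPset/ndG/leq_maxr.
  by move=> [n _ []/= ? ?]; split; exists n.
move=> k; have [? ?] := Foo k; have [? ?] := Goo k.
split; first exact: measurableX.
by rewrite product_measure1E// lte_mul_pinfty// ge0_fin_numE.
Qed.

End psf.

Section L. Variable R : realType.
Definition leb2 := (@lebesgue_measure R \x @lebesgue_measure R)%E.
HB.instance Definition _ := Measure.on leb2.
HB.instance Definition _ := Measure_isSigmaFinite.Build _ _ _ leb2
    (my_pm_sigma_finite _ _ _ _ _ (@lebesgue_measure R) (@lebesgue_measure R)).
Definition leb3' := (leb2 \x @lebesgue_measure R)%E.
HB.instance Definition _ := Measure.on leb3'.
HB.instance Definition _ := Measure_isSigmaFinite.Build _ _ _ leb3'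
    (my_pm_sigma_finite _ _ _ _ _ leb2 (@lebesgue_measure R)).
End L.

Section A.
Variable R : realType.
Section H.
Local Open Scope ereal_scope.
Lemma le_int_nm d (T : measurableType d) (mu : {measure set T -> \bar R}) D (f g : T -> \bar R) :
 (forall x, D x -> 0 <= f x) -> (forall x, D x -> f x <= g x) ->
 \int[mu]_(x in D) f x <= \int[mu]_(x in D) g x.
Proof.
move=> f0 fg; rewrite !ge0_integralE //; last first.
  by move=> x Dx; exact: le_trans (f0 x Dx) (fg x Dx).
apply: ereal_sup_le => _ /= [h hf <-]; exists h => // x; apply: le_trans (hf x) _.
rewrite /patch; case: ifP => // /set_mem Dx; exact: fg.
Qed.

Lemma measurable_inv : measurable_fun [set: R] (@GRing.inv R).
Proof.
have -> : [set: R] = [set x | x != 0%R] `|` [set 0%R].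
  apply/seteqP; split => x //= _; by case: (eqVneq x 0%R) => [->|]; [right|left].
apply/measurable_funU.
- exact: (measurable_realfun.open_measurable (@open_neq R 0%R)).
- rewrite (_ : [set 0%R] = ~` [set x : R | x != 0%R]); last first.
    by apply/seteqP; split => x /=; [move=> -> /eqP|move/negP; rewrite negbK => /eqP].
  apply: measurableC; exact: (measurable_realfun.open_measurable (@open_neq R 0%R)).
split; last exact: measurable_fun_set1.
apply: measurable_realfun.open_continuous_measurable_fun; first exact: open_neq.
by move=> x; rewrite inE => x0; exact: inv_continuous.
Qed.

End H.
Implicit Types x y z u v : R3 R.

Definition mid x z : R3 R := pt ((c1 x + c1 z) / 2) ((c2 x + c2 z) / 2) ((c3 x + c3 z) / 2).
Definition wpt x z (t : R) : R3 R :=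
  pt ((c1 x + c1 z) / 2 + t * (c1 z - c1 x) / dist3 x z)
     ((c2 x + c2 z) / 2 + t * (c2 z - c2 x) / dist3 x z)
     ((c3 x + c3 z) / 2 + t * (c3 z - c3 x) / dist3 x z).
Definition d0 x z y := dot3 (sub3 y (mid x z)) (sub3 y (mid x z)) - ell_y1 x z y ^+ 2.

Lemma dot3_ge0 u : 0 <= dot3 u u.
Proof. rewrite /dot3; nra. Qed.

Lemma dist3_sqr u v : dist3 u v ^+ 2 = dot3 (sub3 u v) (sub3 u v).
Proof. by rewrite /dist3 /norm3 sqr_sqrtr // dot3_ge0. Qed.

Lemma dist3_ge0 u v : 0 <= dist3 u v.
Proof. exact: sqrtr_ge0. Qed.

Lemma dist_w x z y t : 0 < dist3 x z ->
  dist3 y (wpt x z t) ^+ 2 = d0 x z y + (t - ell_y1 x z y) ^+ 2.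
Proof.
move=> r0; have rn0 : dist3 x z != 0 by rewrite gt_eqF.
rewrite /d0 /ell_y1 /wpt /mid dist3_sqr.
move: (dist3_sqr x z) rn0; move: (dist3 x z) => r hr rn0; clear r0.
move: hr.
case: x => [[x1 x2] x3]; case: z => [[z1 z2] z3]; case: y => [[y1 y2] y3].
rewrite /dot3 /sub3 /pt /c1 /c2 /c3 /= => hr.
set S := (x1 - z1) * (x1 - z1) + (x2 - z2) * (x2 - z2) + (x3 - z3) * (x3 - z3).
have hS : S / r ^+ 2 = 1 by rewrite /S -hr divff // sqrf_eq0.
rewrite -[RHS]addr0 -(subrr (t ^+ 2 * (S / r ^+ 2))) {2}hS.
rewrite /S; field.
by [].
Qed.


Lemma hP_lem x z y : dot3 (sub3 y (mid x z)) (sub3 z x) = (dist3 x y ^+ 2 - dist3 y z ^+ 2) / 2.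
Proof. by rewrite !dist3_sqr /dot3 /sub3 /mid /pt /c1 /c2 /c3 /=; field. Qed.

Lemma hM_lem x z y : dot3 (sub3 y (mid x z)) (sub3 y (mid x z)) =
    (dist3 x y ^+ 2 + dist3 y z ^+ 2) / 2 - dist3 x z ^+ 2 / 4.
Proof. by rewrite !dist3_sqr /dot3 /sub3 /mid /pt /c1 /c2 /c3 /=; field. Qed.

Lemma y1E x z y : 0 < dist3 x z ->
  ell_y1 x z y * (2 * dist3 x z) = dist3 x y ^+ 2 - dist3 y z ^+ 2.
Proof.
move=> r0; rewrite /ell_y1 /= -/(mid x z) hP_lem; field.
by rewrite gt_eqF.
Qed.

Lemma dom_bounds x z y : 0 < dist3 x z -> ell_rho x z y <= 2 * dist3 x z ->
  -(2 * dist3 x z) <= ell_y1 x z y <= 2 * dist3 x z /\ d0 x z y <= 4 * dist3 x z ^+ 2.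
Proof.
move=> r0 hr; have hy := y1E x z y r0; have hM := hM_lem x z y.
have a0 := dist3_ge0 x y; have b0 := dist3_ge0 y z.
move: hr hy hM; rewrite /d0 /ell_rho.
move: (ell_y1 x z y) (dist3 x y) (dist3 y z) (dist3 x z) (dot3 _ _) a0 b0 r0 => Y a b r M a0 b0 r0 hr hy hM.
have h1 : a ^+ 2 - b ^+ 2 <= 4 * r ^+ 2 by nra.
have h2 : - (4 * r ^+ 2) <= a ^+ 2 - b ^+ 2 by nra.
split; last by nra.
apply/andP; split; nra.
Qed.

Lemma key_id x z y : 0 < dist3 x z -> ell_rho x z y != 0 ->
  (ell_rho x z y ^+ 2 - dist3 x z ^+ 2) * (1 - ell_cos_theta x z y ^+ 2) = 4 * d0 x z y.
Proof.
move=> r0 rho0; have rn0 : dist3 x z != 0 by rewrite gt_eqF.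
have hP : dot3 (sub3 y (mid x z)) (sub3 z x) = (dist3 x y ^+ 2 - dist3 y z ^+ 2) / 2.
  by rewrite !dist3_sqr /dot3 /sub3 /mid /pt /c1 /c2 /c3 /=; field.
have hM : dot3 (sub3 y (mid x z)) (sub3 y (mid x z)) =
    (dist3 x y ^+ 2 + dist3 y z ^+ 2) / 2 - dist3 x z ^+ 2 / 4.
  by rewrite !dist3_sqr /dot3 /sub3 /mid /pt /c1 /c2 /c3 /=; field.
move: rho0; rewrite /d0 /ell_cos_theta /ell_y1 /ell_rho /=.
rewrite -/(mid x z).
rewrite hP hM => rho0.
field; apply/andP; split => //.
Qed.


Lemma den_cases x z y : 0 < dist3 x z ->
  dist3 x z * Num.sqrt (ell_rho x z y ^+ 2 - dist3 x z ^+ 2) * ell_sin_theta x z y = 0 \/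
  (0 < d0 x z y /\ dist3 x z * Num.sqrt (ell_rho x z y ^+ 2 - dist3 x z ^+ 2) *
     ell_sin_theta x z y = 2 * dist3 x z * Num.sqrt (d0 x z y)).
Proof.
move=> r0; rewrite /ell_sin_theta.
set u := ell_rho x z y ^+ 2 - dist3 x z ^+ 2.
set v := 1 - ell_cos_theta x z y ^+ 2.
have [u0|u0] := lerP u 0; first by left; rewrite (ler0_sqrtr u0) mulr0 mul0r.
have [v0|v0] := lerP v 0; first by left; rewrite (ler0_sqrtr v0) mulr0.
right.
have rho0 : ell_rho x z y != 0.
  apply/eqP => h; move: u0; rewrite /u h; nra.
have kd : u * v = 4 * d0 x z y by exact: key_id.
have d00 : 0 < d0 x z y.
  have : 0 < u * v by apply: mulr_gt0.
  rewrite kd; nra.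
split => //.
rewrite -mulrA -sqrtrM ?ltW // kd sqrtrM ?ler0n //.
rewrite (_ : 4 = 2 ^+ 2); last by rewrite -natrX.
rewrite sqrtr_sqr ger0_norm //; ring.
Qed.



Definition gK (f : R3 R -> R) (w y : R3 R) : R := `|f y| / dist3 y w ^+ 2.
Definition Ivl x z : set R := `[- (4 * dist3 x z), 4 * dist3 x z]%classic.
Definition Fp (f : R3 R -> R) x z (p : R3 R * R) : \bar R :=
  ((\1_(Ivl x z) p.2 / (2 * dist3 x z)) * gK f (wpt x z p.2) p.1)%:E.

Ltac mfun := repeat (first
  [ apply: measurable_funB | apply: measurable_funD | apply: measurable_funM
  | apply: measurable_cst | exact: measurable_fst | exact: measurable_snd
  | apply: (measurableT_comp measurable_fst) | apply: (measurableT_comp measurable_snd) ]).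

Lemma mgK (f : R3 R -> R) w : measurable_fun setT f ->
  measurable_fun setT (fun y => (gK f w y)%:E).
Proof.
move=> mf; apply/measurable_EFinP; rewrite /gK.
apply: measurable_funM; first by apply: measurableT_comp => //; exact: normr_measurable.
apply: (measurableT_comp (measurable_inv)).
rewrite (_ : (fun y => _) = (fun y : R3 R => dot3 (sub3 y w) (sub3 y w))); last first.
  by apply/funext => y; rewrite dist3_sqr.
rewrite /dot3 /sub3 /pt /c1 /c2 /c3 /=.
mfun.
Qed.


Lemma mFp (f : R3 R -> R) x z : measurable_fun setT f ->
  measurable_fun setT (Fp f x z).
Proof.
move=> mf; apply/measurable_EFinP; rewrite /Fp /gK.
apply: measurable_funM.
  apply: measurable_funM; last exact: measurable_cst.
  apply: (measurableT_comp (f := (\1_(Ivl x z) : R -> R)) (g := snd)).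
    apply: measurable_indic; exact: measurable_itv.
  exact: measurable_snd.
apply: measurable_funM.
  apply: (measurableT_comp (f := (@Num.norm R R)) (g := fun p : R3 R * R => f p.1)).
    exact: normr_measurable.
  exact: (measurableT_comp mf measurable_fst).
apply: (measurableT_comp (measurable_inv)).
rewrite (_ : (fun p => _) = (fun p : R3 R * R => dot3 (sub3 p.1 (wpt x z p.2)) (sub3 p.1 (wpt x z p.2)))); last first.
  by apply/funext => p; rewrite dist3_sqr.
rewrite /wpt /dot3 /sub3 /pt /c1 /c2 /c3 /=.
mfun.
Qed.


Lemma Fp_ge0 f x z p : 0 < dist3 x z -> (0 <= Fp f x z p)%E.
Proof.
move=> r0; rewrite /Fp lee_fin /gK; apply: mulr_ge0.
  by apply: divr_ge0; [rewrite indicE ler0n | rewrite ltW // mulr_gt0].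
by apply: divr_ge0; [exact: normr_ge0 | exact: sqr_ge0].
Qed.

Lemma pointwise f x z y : 0 < dist3 x z -> ell_rho x z y <= 2 * dist3 x z ->
  ((`|f y| / (dist3 x z * Num.sqrt (ell_rho x z y ^+ 2 - dist3 x z ^+ 2)
      * ell_sin_theta x z y))%:E
   <= \int[lebesgue_measure]_t Fp f x z (y, t))%E.
Proof.
move=> r0 hr.
case: (den_cases x z y r0) => [-> | [d00 ->]].
  rewrite invr0 mulr0; apply: integral_ge0 => t _; exact: Fp_ge0.
have [/andP[hy1 hy2] hd] := dom_bounds x z y r0 hr.
have := dist_w x z y; rewrite /Fp /gK.
move: (Fp_ge0 f x z); rewrite /Fp /gK.
move: hr hy1 hy2 hd d00 r0.
set r := dist3 x z; set Y := ell_y1 x z y; set D0 := d0 x z y.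
move=> hr hy1 hy2 hd d00 r0 Fge0 distw.
set d := Num.sqrt D0.
have dpos : 0 < d by rewrite sqrtr_gt0.
have dd : d ^+ 2 = D0 by rewrite sqr_sqrtr // ltW.
have d2r : d <= 2 * r by nra.
set c := `|f y| / (4 * r * D0).
have c0 : 0 <= c by apply: divr_ge0 => //; apply: ltW; apply: mulr_gt0 => //; apply: mulr_gt0.
pose J := `[Y - d, Y + d]%classic : set R.
have mJ : measurable J := measurable_itv _.
have intJ : (\int[lebesgue_measure]_t ((\1_J t * c)%:E) = (2 * d * c)%:E)%E.
  under eq_integral do rewrite EFinM muleC.
  have mi : measurable_fun setT (fun t => (\1_J t)%:E : \bar R).
    by apply/measurable_EFinP; exact: measurable_indic.
  have i0 : forall t, setT t -> (0 <= (\1_J t)%:E :> \bar R)%E.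
    by move=> t _; rewrite lee_fin indicE ler0n.
  rewrite ge0_integralZl_EFin //.
  rewrite integral_indic // setIT /J.
  have := lebesgue_measure_itv `[Y - d, Y + d]; rewrite /= => ->.
  rewrite lte_fin ifT; last by lra.
  by rewrite -EFinD -EFinM; congr (_%:E); ring.
apply: (@le_trans _ _ (\int[lebesgue_measure]_t (\1_J t * c)%:E)%E).
  rewrite intJ lee_fin le_eqVlt; apply/orP; left; apply/eqP.
  rewrite /c -dd; field.
  by rewrite !gt_eqF.
apply: le_int_nm.
  by move=> t _; rewrite lee_fin; apply: mulr_ge0 => //; rewrite indicE ler0n.
move=> t _ /=; rewrite lee_fin indicE.
have [tJ|tJ] := boolP (t \in J); last first.
  rewrite mul0r -lee_fin; exact: (Fge0 (y, t)).
move: (tJ); rewrite /J inE /= in_itv /= => /andP[t1 t2].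
have tI : t \in Ivl x z.
  rewrite /Ivl inE /= in_itv /=; rewrite -/r; apply/andP; split; lra.
clearbody d.
have h1 : 0 <= t - (Y - d) by lra.
have h2 : 0 <= Y + d - t by lra.
have h3 := mulr_ge0 h1 h2.
have sle : (t - Y) ^+ 2 <= D0 by rewrite -dd; nra.
have sp : 0 < D0 + (t - Y) ^+ 2 by have := sqr_ge0 (t - Y); lra.
rewrite indicE tI distw //.
have -> : (true%:R : R) = 1 by [].
rewrite (_ : 1 / (2 * r) * (`|f y| / (D0 + (t - Y) ^+ 2)) =
   `|f y| / (2 * r * (D0 + (t - Y) ^+ 2))); last by field; rewrite !gt_eqF.
rewrite /c mul1r; apply: (ler_wpM2l (normr_ge0 (f y))).
rewrite lef_pV2 ?posrE.
- nra.
- by apply: mulr_gt0 => //; apply: mulr_gt0 => //; lra.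
- by apply: mulr_gt0 => //; apply: mulr_gt0 => //; lra.
Qed.

End A.
Arguments gK {R}. Arguments Fp {R}. Arguments Ivl {R}. Arguments wpt {R}.
Arguments pointwise {R}. Arguments Fp_ge0 {R}. Arguments mFp {R}. Arguments mgK {R}.


Theorem lemma5 (R : realType) :
  exists C : R, forall (x z : R3 R), 0 < dist3 x z ->
  forall f : R3 R -> R, inK2 f ->
  (\int[@leb3 R]_(y in [set y | (ell_rho x z y <= 2 * dist3 x z)%R])
      ((`|f y| / (dist3 x z * Num.sqrt (ell_rho x z y ^+ 2 - dist3 x z ^+ 2)
                  * ell_sin_theta x z y))%:E)
   <= C%:E * K2norm f)%E.
Proof.
exists 4 => x z r0 f [mf Kf].
have gle : forall w, (\int[@leb3 R]_y (gK f w y)%:E <= K2norm f)%E.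
  by move=> w; apply: ereal_sup_ubound; exists w.
have K0 : (0 <= K2norm f)%E.
  apply: le_trans (gle x); apply: integral_ge0 => y _.
  by rewrite lee_fin /gK divr_ge0 // sqr_ge0.
have Kfin : K2norm f = (fine (K2norm f))%:E by rewrite fineK // ge0_fin_numE.
move: gle K0; rewrite Kfin; move: (fine (K2norm f)) => k gle; rewrite lee_fin => k0.
apply: (@le_trans _ _ (\int[@leb3 R]_y \int[lebesgue_measure]_t Fp f x z (y, t))%E).
  rewrite integral_mkcond; apply: le_int_nm => y _.
    rewrite patchE; case: ifP => _ //; rewrite lee_fin; apply: divr_ge0 => //.
    by apply: mulr_ge0; [apply: mulr_ge0; [exact: ltW|exact: sqrtr_ge0]|exact: sqrtr_ge0].
  rewrite patchE; case: ifPn => [/set_mem hy|_]; first exact: pointwise.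
  by apply: integral_ge0 => t _; exact: Fp_ge0.
rewrite (_ : @leb3 R = leb3' R) //.
rewrite (fubini_tonelli (m1 := leb3' R) (m2 := lebesgue_measure) (Fp f x z)); last 2 first.
- exact: mFp.
- by move=> p; exact: Fp_ge0.
apply: (@le_trans _ _ (\int[lebesgue_measure]_t ((\1_(Ivl x z) t / (2 * dist3 x z) * k)%:E))%E).
  apply: le_int_nm => t _.
    by apply: integral_ge0 => y _; exact: Fp_ge0.
  have c0 : 0 <= \1_(Ivl x z) t / (2 * dist3 x z).
    by apply: divr_ge0; [rewrite indicE ler0n | rewrite ltW // mulr_gt0].
  rewrite /Fp /=.
  under eq_integral do rewrite EFinM.
  rewrite ge0_integralZl_EFin //; last first.
  - exact: mgK.
  - by move=> y _; rewrite lee_fin /gK divr_ge0 // sqr_ge0.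
  rewrite (EFinM (\1_(Ivl x z) t / (2 * dist3 x z)) k).
  by apply: lee_wpmul2l; [rewrite lee_fin | exact: gle].
have E : forall t, ((\1_(Ivl x z) t / (2 * dist3 x z) * k)%:E =
    ((k / (2 * dist3 x z))%:E * (\1_(Ivl x z) t)%:E)%E).
  by move=> t; rewrite -EFinM; congr (_%:E); ring.
under eq_integral do rewrite E.
have mi : measurable_fun setT (fun t => (\1_(Ivl x z) t)%:E : \bar R).
  by apply/measurable_EFinP; apply: measurable_indic; exact: measurable_itv.
have i0 : forall t, setT t -> (0 <= (\1_(Ivl x z) t)%:E :> \bar R)%E.
  by move=> t _; rewrite lee_fin indicE ler0n.
rewrite ge0_integralZl_EFin //; last by apply: divr_ge0 => //; rewrite ltW // mulr_gt0.
rewrite integral_indic; last exact: measurable_itv.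
rewrite setIT /Ivl.
have := lebesgue_measure_itv `[- (4 * dist3 x z), 4 * dist3 x z]; rewrite /= => ->.
rewrite lte_fin ifT; last by lra.
rewrite -EFinD -!EFinM lee_fin le_eqVlt; apply/orP; left; apply/eqP.
by field; rewrite gt_eqF.
exact: measurableT.
Qed.
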